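(* Let $X$ and $Y$ be Hausdorff uniform spaces and $f\colon X\to Y$ a function generating the uniform structure of $Y$. (1) If $f$ satisfies conditions GP1 and GP2, then $\widetilde f\colon GP(X,x_0)\to GP(Y,f(x_0))$ is a uniform equivalence for each $x_0\in X$. (2) If $X$ is joinable and $\widetilde f\colon GP(X,x_1)\to GP(Y,f(x_1))$ is a uniform equivalence for some $x_1\in X$, then $f$ satisfies GP1 and GP2.
   Context: $f(E)=\{(f(x),f(y)):(x,y)\in E\}$; a surjection $f$ generates the uniform structure of its range if the sets $f(E)$ form a base of it. $R(X,E)$ is the Rips complex (vertex set $X$, simplices the finite $F$ with $F\times F\subset E$); $e(x,y)$ the edge-path; $f_E\colon R(X,E)\to R(Y,f(E))$ the induced simplicial map. Paths $c,d$ in $R(X,E)$ with end-points in $X$ are $E$-homotopic if their initial points $x_c,x_d$ and terminal points $y_c,y_d$ satisfy $(x_c,x_d),(y_c,y_d)\in E$ and $c\simeq e(x_c,x_d)\ast d\ast e(y_d,y_c)$ rel. end-points in $R(X,E)$. A generalized path from $x$ to $y$ is a family $\{[c_E]\}_E$ over all entourages of homotopy classes rel. end-points of paths from $x$ to $y$ in $R(X,E)$ with $c_F\simeq c_E$ in $R(X,E)$ for $F\subset E$. $GP(X,x_0)$ is the set of generalized paths starting at $x_0$ with the uniform structure with base $F^\ast=\{(c,d): c_F \text{ is } F\text{-homotopic to } d_F\}$; two generalized paths $c,d$ are called $F$-homotopic if $(c,d)\in F^\ast$. For uniformly continuous $f$, $\widetilde f\colon GP(X,x_0)\to GP(Y,f(x_0))$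 is defined by $\widetilde f(c)_F=[f_E(c_E)]$ with $E=f^{-1}(F)$. $X$ is joinable if any two points are joined by a generalized path. GP1: every generalized path in $Y$ starting at $f(x_0)$ equals $\widetilde f(d)$ for some generalized path $d$ in $X$ starting at $x_0$ (for every $x_0\in X$). GP2: for every entourage $E$ of $X$ there is an entourage $F$ of $X$ such that any two generalized paths $\alpha,\beta$ in $X$ with common origin are $E$-homotopic whenever $\widetilde f(\alpha)$ and $\widetilde f(\beta)$ are $f(F)$-homotopic. *)

(* Defs.v *)
From Stdlib Require Import List Relations.
Import ListNotations.

Definition ent (X : Type) := X -> X -> Prop.

Definition subrel {X : Type} (E F : ent X) : Prop := forall a b, E a b -> F a b.

Definition uniformity {X : Type} (U : ent X -> Prop) : Prop :=
  U (fun _ _ => True) /\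
  (forall E, U E -> forall x, E x x) /\
  (forall E F, U E -> subrel E F -> U F) /\
  (forall E F, U E -> U F -> U (fun a b => E a b /\ F a b)) /\
  (forall E, U E -> U (fun a b => E b a)) /\
  (forall E, U E -> exists F, U F /\ forall x y z, F x y -> F y z -> E x z).

Definition hausdorff {X : Type} (U : ent X -> Prop) : Prop :=
  forall x y, (forall E, U E -> E x y) -> x = y.

Definition img {X Y : Type} (f : X -> Y) (E : ent X) : ent Y :=
  fun u v => exists x y, E x y /\ f x = u /\ f y = v.

Definition preim {X Y : Type} (f : X -> Y) (F : ent Y) : ent X :=
  fun a b => F (f a) (f b).

Definition generates {X Y : Type} (UX : ent X -> Prop) (UY : ent Y -> Prop)
  (f : X -> Y) : Prop :=
  (forall y, exists x, f x = y) /\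
  (forall E, UX E -> UY (img f E)) /\
  (forall G, UY G -> exists E, UX E /\ subrel (img f E) G).

(** Rips complex R(X,E): a finite set (list) is a simplex iff F x F ⊆ E *)
Definition simplex {X : Type} (E : ent X) (s : list X) : Prop :=
  forall u v, In u s -> In v s -> E u v.

(** edge paths in R(X,E), given by their vertex sequences *)
Fixpoint chain {X : Type} (E : ent X) (p : list X) : Prop :=
  match p with
  | a :: ((b :: _) as t) => simplex E [a; b] /\ chain E t
  | _ => True
  end.

Definition is_path {X : Type} (E : ent X) (x y : X) (p : list X) : Prop :=
  (exists l, p = x :: l) /\ chain E p /\ last p x = y.

(** elementary edge-path moves (generating homotopy rel. end-points) *)
Definition step {X : Type} (E : ent X) (p q : list X) : Prop :=
  (exists l1 l2 a b c, simplex E [a; b; c] /\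
      p = l1 ++ a :: b :: c :: l2 /\ q = l1 ++ a :: c :: l2) \/
  (exists l1 l2 a, p = l1 ++ a :: a :: l2 /\ q = l1 ++ a :: l2).

Definition htpy {X : Type} (E : ent X) (p q : list X) : Prop :=
  chain E p /\ chain E q /\ clos_refl_sym_trans (list X) (step E) p q.

Definition pcat {X : Type} (c d : list X) : list X := c ++ tl d.
Definition epath {X : Type} (x y : X) : list X := [x; y].

Definition ehtpy {X : Type} (E : ent X) (c d : list X) : Prop :=
  exists xc yc xd yd,
    is_path E xc yc c /\ is_path E xd yd d /\ E xc xd /\ E yc yd /\
    htpy E c (pcat (pcat (epath xc xd) d) (epath yd yc)).

(** generalized paths from x to y: a representative c_E for each entourage E *)
Definition gpath {X : Type} (U : ent X -> Prop) (x y : X)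
  (g : ent X -> list X) : Prop :=
  (forall E, U E -> is_path E x y (g E)) /\
  (forall E F, U E -> U F -> subrel F E -> htpy E (g F) (g E)).

Definition inGP {X : Type} (U : ent X -> Prop) (x0 : X) (g : ent X -> list X)
  : Prop := exists y, gpath U x0 y g.

Definition gpeq {X : Type} (U : ent X -> Prop) (g h : ent X -> list X) : Prop :=
  forall E, U E -> htpy E (g E) (h E).

(** basic entourage F^* of GP(X,x0) *)
Definition gpent {X : Type} (F : ent X) (g h : ent X -> list X) : Prop :=
  ehtpy F (g F) (h F).

Definition ftilde {X Y : Type} (f : X -> Y) (g : ent X -> list X) :
  ent Y -> list Y := fun F => map f (g (preim f F)).

Definition joinable {X : Type} (U : ent X -> Prop) : Prop :=
  forall x y, exists g, gpath U x y g.

Definition GP1 {X Y : Type} (UX : ent X -> Prop) (UY : ent Y -> Prop)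
  (f : X -> Y) : Prop :=
  forall x0 b, inGP UY (f x0) b ->
    exists d, inGP UX x0 d /\ gpeq UY (ftilde f d) b.

Definition GP2 {X Y : Type} (UX : ent X -> Prop) (UY : ent Y -> Prop)
  (f : X -> Y) : Prop :=
  forall E, UX E -> exists F, UX F /\
    forall (x : X) a b, inGP UX x a -> inGP UX x b ->
      gpent (img f F) (ftilde f a) (ftilde f b) -> gpent E a b.

(** f~ : GP(X,x0) -> GP(Y,f x0) is a uniform equivalence
    (well-defined, bijective, uniformly continuous with uniformly
    continuous inverse; uniformities given by the bases F^* ) *)
Definition unif_equiv {X Y : Type} (UX : ent X -> Prop) (UY : ent Y -> Prop)
  (f : X -> Y) (x0 : X) : Prop :=
  (forall a b, inGP UX x0 a -> inGP UX x0 b -> gpeq UX a b ->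
     gpeq UY (ftilde f a) (ftilde f b)) /\
  (forall a b, inGP UX x0 a -> inGP UX x0 b ->
     gpeq UY (ftilde f a) (ftilde f b) -> gpeq UX a b) /\
  (forall b, inGP UY (f x0) b -> exists a, inGP UX x0 a /\ gpeq UY (ftilde f a) b) /\
  (forall G, UY G -> exists F, UX F /\ forall a b, inGP UX x0 a -> inGP UX x0 b ->
     gpent F a b -> gpent G (ftilde f a) (ftilde f b)) /\
  (forall F, UX F -> exists G, UY G /\ forall a b, inGP UX x0 a -> inGP UX x0 b ->
     gpent G (ftilde f a) (ftilde f b) -> gpent F a b).

(* Main.v *)
Require Import Defs.
From Stdlib Require Import List Relations.
Import ListNotations.

Lemma last_cons {X} (a : X) l d : last (a :: l) d = last l a.
Proof. revert a d; induction l as [|b l IH]; intros a d; [reflexivity|].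
  change (last (a :: b :: l) d) with (last (b :: l) d). rewrite !IH. reflexivity. Qed.

Lemma last_app' {X} (l m : list X) d : last (l ++ m) d = last m (last l d).
Proof. revert d; induction l as [|a l IH]; intro d; [reflexivity|].
  rewrite <- app_comm_cons, !last_cons. apply IH. Qed.

Lemma last_indep {X} (p : list X) d d' : p <> [] -> last p d = last p d'.
Proof. destruct p as [|a l]; [congruence|]. intros _. rewrite !last_cons. reflexivity. Qed.

Lemma simplex_sub {X} (E : ent X) s s' : (forall u, In u s -> In u s') ->
  simplex E s' -> simplex E s.
Proof. intros H S u v Hu Hv. apply S; auto. Qed.

Lemma simplex_sym {X} (E : ent X) a b : simplex E [a; b] -> simplex E [b; a].
Proof. apply simplex_sub. simpl; tauto. Qed.

Lemma chain_cons2 {X} (E : ent X) a b l :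
  chain E (a :: b :: l) <-> simplex E [a; b] /\ chain E (b :: l).
Proof. reflexivity. Qed.

Lemma chain_tl {X} (E : ent X) a l : chain E (a :: l) -> chain E l.
Proof. destruct l; simpl; tauto. Qed.

Lemma chain_join {X} (E : ent X) l a m :
  chain E (l ++ [a]) -> chain E (a :: m) -> chain E (l ++ a :: m).
Proof. induction l as [|b l IH]; [simpl; auto|].
  intros H1 H2. destruct l as [|c l].
  - simpl in *. split; [tauto|]. auto.
  - change ((b :: c :: l) ++ [a]) with (b :: c :: (l ++ [a])) in H1.
    change ((b :: c :: l) ++ a :: m) with (b :: c :: (l ++ a :: m)).
    apply chain_cons2 in H1 as [H1 H3]. apply chain_cons2. split; [exact H1|].
    apply (IH H3 H2). Qed.

Lemma chain_app_inv {X} (E : ent X) l m : chain E (l ++ m) -> chain E l /\ chain E m.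
Proof. induction l as [|a l IH]; [simpl; split; auto; exact I|].
  intro H. destruct l as [|b l].
  - simpl in H. split; [exact I|]. destruct m; [exact I|]. apply H.
  - change ((a :: b :: l) ++ m) with (a :: b :: (l ++ m)) in H.
    apply chain_cons2 in H as [H1 H2]. destruct (IH H2). split; auto.
    apply chain_cons2; auto. Qed.

Lemma chain_mono {X} (E F : ent X) p : subrel E F -> chain E p -> chain F p.
Proof. intro S. induction p as [|a p IH]; [auto|]. destruct p as [|b p]; [auto|].
  intros [H1 H2]. split; auto. intros u v Hu Hv. apply S, H1; auto. Qed.

Lemma simplex_map {X Y} (f : X -> Y) G s : simplex (preim f G) s -> simplex G (map f s).
Proof. intros H u v Hu Hv. apply in_map_iff in Hu as [a [<- Ha]].
  apply in_map_iff in Hv as [b [<- Hb]]. apply (H a b Ha Hb). Qed.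

Lemma chain_map {X Y} (f : X -> Y) G p : chain (preim f G) p -> chain G (map f p).
Proof. induction p as [|a p IH]; [simpl; auto|]. destruct p as [|b p]; [simpl; auto|].
  intros [H1 H2]. split; [apply (simplex_map f G [a;b] H1)| apply IH; auto]. Qed.

Lemma chain_rev {X} (E : ent X) p : chain E p -> chain E (rev p).
Proof. induction p as [|a p IH]; [simpl; auto|]. destruct p as [|b p]; [simpl; auto|].
  intros [H1 H2]. change (rev (a :: b :: p)) with ((rev p ++ [b]) ++ [a]).
  rewrite <- app_assoc. apply chain_join; [apply IH; auto|].
  split; [apply simplex_sym; auto| exact I]. Qed.

Lemma path_uniq {X} (E E' : ent X) x y x' y' p :
  is_path E x y p -> is_path E' x' y' p -> x = x' /\ y = y'.
Proof. intros [[l ->] [_ H1]] [[l' H] [_ H2]]. injection H as <- <-. subst. auto. Qed.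

Lemma path_mono {X} (E F : ent X) x y p : subrel E F -> is_path E x y p -> is_path F x y p.
Proof. intros S [H1 [H2 H3]]. split; [|split]; eauto using chain_mono. Qed.

Lemma path_map {X Y} (f : X -> Y) G x y p :
  is_path (preim f G) x y p -> is_path G (f x) (f y) (map f p).
Proof. intros [[l ->] [H2 H3]]. split; [exists (map f l); reflexivity|split].
  - apply chain_map; auto.
  - simpl map. rewrite last_cons. rewrite last_cons in H3. subst y.
    clear. revert x; induction l as [|a l IH]; intro x; [reflexivity|].
    simpl map. rewrite !last_cons. apply IH. Qed.

Lemma path_decomp {X} (E : ent X) x y p : is_path E x y p -> p = removelast p ++ [y].
Proof. intros [[l ->] [_ H]]. rewrite <- H. apply app_removelast_last. congruence. Qed.

Lemma path_rev {X} (E : ent X) x y p : is_path E x y p -> is_path E y x (rev p).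
Proof. intros Hp. pose proof (path_decomp _ _ _ _ Hp) as Hd.
  destruct Hp as [[l ->] [H2 H3]]. split; [|split].
  - rewrite Hd. rewrite rev_app_distr. simpl. eexists; reflexivity.
  - apply chain_rev; auto.
  - simpl rev. rewrite last_app'. reflexivity. Qed.

Definition pcat_def {X} (c d : list X) : pcat c d = c ++ tl d := eq_refl.

Lemma path_pcat {X} (E : ent X) x y z p q :
  is_path E x y p -> is_path E y z q -> is_path E x z (pcat p q).
Proof. intros Hp Hq. pose proof (path_decomp _ _ _ _ Hp) as Hd.
  destruct Hp as [[l ->] [H2 H3]]. destruct Hq as [[m ->] [H4 H5]].
  unfold pcat. simpl tl. split; [|split].
  - eexists; reflexivity.
  - remember (x :: l) as p. rewrite Hd. rewrite <- app_assoc.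
    apply chain_join; [rewrite <- Hd; auto|auto].
  - rewrite last_app'. rewrite H3. rewrite last_cons in H5. exact H5. Qed.

Lemma pcat_eq {X} (E : ent X) x y p t : is_path E x y p ->
  pcat p (y :: t) = removelast p ++ y :: t.
Proof. intro Hp. unfold pcat. simpl. rewrite (path_decomp _ _ _ _ Hp) at 1.
  rewrite <- app_assoc. reflexivity. Qed.

Lemma path_snoc {X} (E : ent X) x y z d :
  is_path E x y d -> simplex E [y; z] -> is_path E x z (d ++ [z]).
Proof. intros Hp S. pose proof (path_pcat E x y z d [y;z] Hp) as H.
  assert (is_path E y z [y; z]) as Hq by (split; [eexists; reflexivity| split; [split; [auto|exact I]|reflexivity]]).
  apply H in Hq. exact Hq. Qed.

Lemma crst_map {A B} (R : relation A) (S : relation B) (h : A -> B) :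
  (forall x y, R x y -> S (h x) (h y)) ->
  forall x y, clos_refl_sym_trans A R x y -> clos_refl_sym_trans B S (h x) (h y).
Proof. intros H x y C. induction C.
  - apply rst_step; auto.
  - apply rst_refl.
  - apply rst_sym; auto.
  - eapply rst_trans; eauto. Qed.

Lemma crst_inv {A B} (R : relation A) (P : A -> B) :
  (forall x y, R x y -> P x = P y) ->
  forall x y, clos_refl_sym_trans A R x y -> P x = P y.
Proof. intros H x y C. induction C; auto; congruence. Qed.

Lemma step_app_l {X} (E : ent X) p q q' : step E q q' -> step E (p ++ q) (p ++ q').
Proof. intros [(l1 & l2 & a & b & c & S & -> & ->)|(l1 & l2 & a & -> & ->)].
  - left. exists (p ++ l1), l2, a, b, c. rewrite !app_assoc. auto.
  - right. exists (p ++ l1), l2, a. rewrite !app_assoc. auto. Qed.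

Lemma step_app_r {X} (E : ent X) p p' s : step E p p' -> step E (p ++ s) (p' ++ s).
Proof. intros [(l1 & l2 & a & b & c & S & -> & ->)|(l1 & l2 & a & -> & ->)].
  - left. exists l1, (l2 ++ s), a, b, c. rewrite <- !app_assoc. auto.
  - right. exists l1, (l2 ++ s), a. rewrite <- !app_assoc. auto. Qed.

Lemma step_mono {X} (E F : ent X) p q : subrel E F -> step E p q -> step F p q.
Proof. intros SS [(l1 & l2 & a & b & c & S & -> & ->)|H]; [|right; auto].
  left. exists l1, l2, a, b, c. split; auto. intros u v Hu Hv. apply SS, S; auto. Qed.

Lemma step_map {X Y} (f : X -> Y) G p q : step (preim f G) p q -> step G (map f p) (map f q).
Proof. intros [(l1 & l2 & a & b & c & S & -> & ->)|(l1 & l2 & a & -> & ->)].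
  - left. exists (map f l1), (map f l2), (f a), (f b), (f c).
    rewrite !map_app. split; [apply (simplex_map f G [a;b;c] S)|]. auto.
  - right. exists (map f l1), (map f l2), (f a). rewrite !map_app. auto. Qed.

Lemma step_rev {X} (E : ent X) p q : step E p q -> step E (rev p) (rev q).
Proof. intros [(l1 & l2 & a & b & c & S & -> & ->)|(l1 & l2 & a & -> & ->)].
  - left. exists (rev l2), (rev l1), c, b, a. rewrite !rev_app_distr. simpl.
    split; [revert S; apply simplex_sub; simpl; tauto|].
    rewrite <- !app_assoc. auto.
  - right. exists (rev l2), (rev l1), a. rewrite !rev_app_distr. simpl.
    rewrite <- !app_assoc. auto. Qed.

Lemma step_hd {X} (E : ent X) p q : step E p q -> hd_error p = hd_error q.
Proof. intros [(l1 & l2 & a & b & c & S & -> & ->)|(l1 & l2 & a & -> & ->)];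
  destruct l1; reflexivity. Qed.

Lemma step_last {X} (E : ent X) d p q : step E p q -> last p d = last q d.
Proof. intros [(l1 & l2 & a & b & c & S & -> & ->)|(l1 & l2 & a & -> & ->)];
  rewrite !last_app', !last_cons; reflexivity. Qed.

Lemma htpy_refl {X} (E : ent X) p : chain E p -> htpy E p p.
Proof. intro; split; [|split]; auto. apply rst_refl. Qed.

Lemma htpy_sym {X} (E : ent X) p q : htpy E p q -> htpy E q p.
Proof. intros [? [? ?]]; split; [|split]; auto. apply rst_sym; auto. Qed.

Lemma htpy_trans {X} (E : ent X) p q r : htpy E p q -> htpy E q r -> htpy E p r.
Proof. intros [? [? ?]] [? [? ?]]; split; [|split]; auto. eapply rst_trans; eauto. Qed.

Lemma htpy_mono {X} (E F : ent X) p q : subrel E F -> htpy E p q -> htpy F p q.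
Proof. intros S [? [? C]]; split; [|split]; eauto using chain_mono.
  apply (crst_map (step E) (step F) id); auto. intros; apply (step_mono E); auto. Qed.

Lemma htpy_map {X Y} (f : X -> Y) G p q : htpy (preim f G) p q -> htpy G (map f p) (map f q).
Proof. intros [? [? C]]; split; [|split]; auto using chain_map.
  eapply (crst_map (step _) (step _) (map f)); [intros; apply step_map; eassumption|exact C]. Qed.

Lemma htpy_rev {X} (E : ent X) p q : htpy E p q -> htpy E (rev p) (rev q).
Proof. intros [? [? C]]; split; [|split]; auto using chain_rev.
  eapply (crst_map (step _) (step _) (@rev X)); [intros; apply step_rev; eassumption|exact C]. Qed.

Lemma htpy_path {X} (E : ent X) x y p q : htpy E p q -> is_path E x y p -> is_path E x y q.
Proof. intros [_ [Hq C]] [[l ->] [_ H3]].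
  pose proof (crst_inv _ (@hd_error X) (step_hd E) _ _ C) as Hh.
  pose proof (crst_inv _ (fun p => last p x) (step_last E x) _ _ C) as Hl.
  simpl in Hh. split; [|split]; auto.
  - destruct q; simpl in Hh; [discriminate|]. injection Hh as ->. eexists; reflexivity.
  - rewrite <- Hl. exact H3. Qed.

Lemma htpy_cat_l {X} (E : ent X) x y z p p' q :
  is_path E x y p -> is_path E x y p' -> is_path E y z q -> htpy E p p' ->
  htpy E (pcat p q) (pcat p' q).
Proof. intros Hp Hp' Hq [_ [_ C]]. split; [|split].
  - eapply path_pcat; eauto.
  - eapply path_pcat; eauto.
  - unfold pcat. eapply (crst_map (step _) (step _) (fun p => p ++ tl q));
    [intros; apply step_app_r; eassumption|exact C]. Qed.

Lemma htpy_cat_r {X} (E : ent X) x y z z' p q q' :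
  is_path E x y p -> is_path E y z q -> is_path E y z' q' -> htpy E q q' ->
  htpy E (pcat p q) (pcat p q').
Proof. intros Hp Hq Hq' H. pose proof Hq as [[t ->] _]. pose proof Hq' as [[t' ->] _].
  split; [|split]; try (eapply path_pcat; eauto).
  rewrite !(pcat_eq E x y p); auto. destruct H as [_ [_ C]].
  eapply (crst_map (step _) (step _) (fun q => removelast p ++ q));
  [intros; apply step_app_l; eassumption|exact C]. Qed.

Lemma htpy_cat {X} (E : ent X) x y z z' p p' q q' :
  is_path E x y p -> is_path E x y p' -> is_path E y z q -> is_path E y z' q' ->
  htpy E p p' -> htpy E q q' -> htpy E (pcat p q) (pcat p' q').
Proof. intros. eapply htpy_trans; [eapply htpy_cat_l; eauto|eapply htpy_cat_r; eauto]. Qed.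

Lemma crst_cancel {X} (E : ent X) x t :
  chain E (x :: t) -> clos_refl_sym_trans _ (step E) (rev (x :: t) ++ t) [last t x].
Proof. revert x; induction t as [|b t IH]; intros x H; [apply rst_refl|].
  destruct H as [S H]. eapply rst_trans; [|rewrite last_cons; apply IH; auto].
  change (rev (x :: b :: t)) with ((rev t ++ [b]) ++ [x]).
  change (rev (b :: t)) with (rev t ++ [b]).
  rewrite <- !app_assoc. simpl.
  eapply rst_trans; apply rst_step.
  - left. exists (rev t), t, b, x, b. split; [revert S; apply simplex_sub; simpl; tauto|].
    split; reflexivity.
  - right. exists (rev t), t, b. split; reflexivity. Qed.

Lemma htpy_cancel {X} (E : ent X) x y z p q :
  is_path E x y p -> is_path E y z q -> htpy E (pcat (pcat (rev p) p) q) q.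
Proof. intros Hp Hq. split; [|split].
  - eapply path_pcat; [eapply path_pcat; [eapply path_rev|]|]; eauto.
  - apply Hq.
  - destruct Hp as [[t ->] [H2 H3]]. destruct Hq as [[m ->] _].
    unfold pcat; simpl tl. rewrite last_cons in H3.
    pose proof (crst_map (step E) (step E) (fun p => p ++ m)
      ltac:(intros; apply step_app_r; eassumption) _ _ (crst_cancel E x t H2)) as H.
    rewrite H3 in *. exact H. Qed.

Lemma pcat_assoc {X} (p q r : list X) : q <> [] -> pcat (pcat p q) r = pcat p (pcat q r).
Proof. destruct q as [|a q]; [congruence|]. intros _. unfold pcat. simpl.
  rewrite app_assoc. reflexivity. Qed.

Lemma map_pcat {X Y} (f : X -> Y) p q : map f (pcat p q) = pcat (map f p) (map f q).
Proof. unfold pcat. rewrite map_app. destruct q; reflexivity. Qed.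

Lemma htpy_dup {X} (E : ent X) x c w : E x x -> htpy E c (x :: x :: w) <-> htpy E c (x :: w).
Proof. intro Hx. assert (St : step E (x :: x :: w) (x :: w)).
  { right. exists [], w, x. split; reflexivity. }
  assert (Sx : simplex E [x; x]).
  { intros u v Hu Hv. simpl in Hu, Hv. destruct Hu as [<-|[<-|[]]]; destruct Hv as [<-|[<-|[]]]; auto. }
  split; intros [H1 [H2 H3]]; split; auto; split.
  - apply chain_tl in H2; auto.
  - eapply rst_trans; [exact H3|apply rst_step; auto].
  - split; auto.
  - eapply rst_trans; [exact H3|apply rst_sym, rst_step; auto]. Qed.

Lemma ehtpy_iff {X} (E : ent X) x y1 y2 c d :
  is_path E x y1 c -> is_path E x y2 d -> E x x ->
  (ehtpy E c d <-> E y1 y2 /\ htpy E c (d ++ [y1])).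
Proof. intros Hc Hd Hx. pose proof Hd as [[t Ht] _].
  assert (Eq : pcat (pcat (epath x x) d) (epath y2 y1) = x :: x :: (t ++ [y1])).
  { subst d. reflexivity. }
  assert (Eq2 : d ++ [y1] = x :: t ++ [y1]) by (subst d; reflexivity).
  split.
  - intros (xc & yc & xd & yd & P1 & P2 & H1 & H2 & H3).
    destruct (path_uniq _ _ _ _ _ _ _ Hc P1) as [<- <-].
    destruct (path_uniq _ _ _ _ _ _ _ Hd P2) as [<- <-].
    split; auto. rewrite Eq in H3. rewrite Eq2. apply (htpy_dup E x); auto.
  - intros [H1 H2]. exists x, y1, x, y2. split; [|split; [|split; [|split]]]; auto.
    rewrite Eq. rewrite Eq2 in H2. apply htpy_dup; auto. Qed.

Lemma htpy_snoc {X} (E : ent X) p q s : htpy E p q -> chain E (p ++ s) -> chain E (q ++ s) ->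
  htpy E (p ++ s) (q ++ s).
Proof. intros [_ [_ C]] H1 H2. split; [|split]; auto.
  eapply (crst_map (step _) (step _) (fun p => p ++ s)); [intros; apply step_app_r; eassumption|exact C]. Qed.

Lemma htpy_undup_end {X} (E : ent X) x y d : is_path E x y d -> E y y -> htpy E (d ++ [y]) d.
Proof. intros Hd Hy. split; [|split].
  - eapply path_snoc; eauto. intros u v Hu Hv. simpl in Hu, Hv.
    destruct Hu as [<-|[<-|[]]]; destruct Hv as [<-|[<-|[]]]; auto.
  - apply Hd.
  - rewrite (path_decomp _ _ _ _ Hd) at 2. rewrite (path_decomp _ _ _ _ Hd) at 1.
    rewrite <- app_assoc. apply rst_step. right. exists (removelast d), [], y. split; reflexivity. Qed.

Lemma ehtpy_same {X} (E : ent X) x y c d :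
  is_path E x y c -> is_path E x y d -> E x x -> E y y -> (ehtpy E c d <-> htpy E c d).
Proof. intros Hc Hd Hx Hy. rewrite (ehtpy_iff E x y y c d Hc Hd Hx).
  pose proof (htpy_undup_end E x y d Hd Hy) as U. split.
  - intros [_ H]. eapply htpy_trans; eauto.
  - intro H. split; auto. eapply htpy_trans; eauto. apply htpy_sym; auto. Qed.

Lemma ehtpy_map {X Y} (f : X -> Y) G c d : ehtpy (preim f G) c d -> ehtpy G (map f c) (map f d).
Proof. intros (xc & yc & xd & yd & P1 & P2 & H1 & H2 & H3).
  exists (f xc), (f yc), (f xd), (f yd). split; [|split; [|split; [|split]]].
  - apply path_map; auto.
  - apply path_map; auto.
  - exact H1.
  - exact H2.
  - apply htpy_map in H3. rewrite !map_pcat in H3. exact H3. Qed.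

Lemma last_seg {X} (E : ent X) x y1 y2 d : is_path E x y2 d -> chain E (d ++ [y1]) ->
  simplex E [y2; y1].
Proof. intros Hd H. rewrite (path_decomp _ _ _ _ Hd) in H. rewrite <- app_assoc in H.
  apply chain_app_inv in H as [_ H]. apply H. Qed.

Lemma ehtpy_shift {X} (E : ent X) z x y1 y2 p c d :
  is_path E z x p -> is_path E x y1 c -> is_path E x y2 d -> E x x -> E z z ->
  ehtpy E c d -> ehtpy E (pcat p c) (pcat p d).
Proof. intros Hp Hc Hd Hx Hz H.
  apply (ehtpy_iff E x y1 y2 c d Hc Hd Hx) in H as [H1 H2].
  apply (ehtpy_iff E z y1 y2); [eapply path_pcat; eauto|eapply path_pcat; eauto|auto|].
  split; auto. pose proof Hd as [[t ->] _].
  replace (pcat p (x :: t) ++ [y1]) with (pcat p ((x :: t) ++ [y1]))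
    by (unfold pcat; simpl; rewrite app_assoc; reflexivity).
  eapply htpy_cat_r; eauto. eapply htpy_path; eauto. Qed.

Lemma ehtpy_unshift {X} (E : ent X) z x y1 y2 p c d :
  is_path E z x p -> is_path E x y1 c -> is_path E x y2 d -> E x x -> E z z ->
  ehtpy E (pcat p c) (pcat p d) -> ehtpy E c d.
Proof. intros Hp Hc Hd Hx Hz H.
  apply (ehtpy_iff E z y1 y2) in H as [H1 H2];
    [|eapply path_pcat; eauto|eapply path_pcat; eauto|auto].
  apply (ehtpy_iff E x y1 y2 c d Hc Hd Hx). split; auto.
  pose proof Hd as [[t Ht] _].
  assert (Eq : pcat p d ++ [y1] = pcat p (d ++ [y1]))
    by (subst d; unfold pcat; simpl; rewrite app_assoc; reflexivity).
  rewrite Eq in H2.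
  assert (Hd' : is_path E x y1 (d ++ [y1])).
  { destruct H2 as [_ [Ch _]]. subst d. change ((x :: t) ++ [y1]) with (x :: (t ++ [y1])) in Ch |- *.
    rewrite (pcat_eq E z x p) in Ch; auto.
    apply chain_app_inv in Ch as [_ Ch].
    split; [eexists; reflexivity|split; auto].
    change (x :: t ++ [y1]) with ((x :: t) ++ [y1]). rewrite last_app'. reflexivity. }
  assert (Hr : is_path E x z (rev p)) by (eapply path_rev; eauto).
  assert (Hne : p <> []) by (destruct Hp as [[l ->] _]; congruence).
  pose proof (htpy_cat_r E x z y1 y1 (rev p) (pcat p c) (pcat p (d ++ [y1])) Hr
     (path_pcat E z x y1 p c Hp Hc) (path_pcat E z x y1 p _ Hp Hd') H2) as K.
  rewrite <- !pcat_assoc in K by auto.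
  eapply htpy_trans; [apply htpy_sym; exact (htpy_cancel E z x y1 p c Hp Hc)|].
  eapply htpy_trans; [exact K|]. exact (htpy_cancel E z x y1 p _ Hp Hd'). Qed.

Section U.
Context {X : Type} (U : ent X -> Prop) (hU : uniformity U).
Lemma U_refl E x : U E -> E x x.
Proof. intro HE. destruct hU as [_ [h _]]. apply h; auto. Qed.
Lemma U_up E F : U E -> subrel E F -> U F.
Proof. destruct hU as [_ [_ [h _]]]. apply h. Qed.
Lemma U_top : U (fun _ _ => True).
Proof. apply (proj1 hU). Qed.

Lemma gpath_uniq x x' y y' g : gpath U x y g -> gpath U x' y' g -> x = x' /\ y = y'.
Proof. intros [H1 _] [H2 _]. eapply path_uniq; [apply H1|apply H2]; apply U_top. Qed.

Lemma gpath_cat x y z g h : gpath U x y g -> gpath U y z h ->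
  gpath U x z (fun E => pcat (g E) (h E)).
Proof. intros [G1 G2] [H1 H2]. split.
  - intros E HE. eapply path_pcat; eauto.
  - intros E F HE HF S. eapply htpy_cat.
    + eapply path_mono; [exact S|apply G1; auto].
    + apply G1; auto.
    + eapply path_mono; [exact S|apply H1; auto].
    + apply H1; auto.
    + apply G2; auto.
    + apply H2; auto. Qed.

Lemma gpath_rev x y g : gpath U x y g -> gpath U y x (fun E => rev (g E)).
Proof. intros [G1 G2]. split.
  - intros E HE. eapply path_rev; eauto.
  - intros E F HE HF S. apply htpy_rev; auto. Qed.

Lemma gpent_mono x ya yb a b E1 E2 : gpath U x ya a -> gpath U x yb b ->
  U E1 -> U E2 -> subrel E1 E2 -> gpent E1 a b -> gpent E2 a b.
Proof. intros [A1 A2] [B1 B2] H1 H2 S H. unfold gpent in *.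
  apply (ehtpy_iff E1 x ya yb) in H as [K1 K2]; [|apply A1; auto|apply B1; auto|apply (U_refl E1); auto].
  apply (ehtpy_iff E2 x ya yb); [apply A1; auto|apply B1; auto|apply (U_refl E2); auto|].
  split; [apply S; auto|].
  assert (Ss : simplex E2 [yb; ya]).
  { pose proof (last_seg E1 x ya yb (b E1) (B1 E1 H1) (proj1 (proj2 K2))) as Sx.
    intros u v Hu Hv. apply S, Sx; auto. }
  eapply htpy_trans; [apply htpy_sym; apply (A2 E2 E1); auto|].
  eapply htpy_trans; [eapply htpy_mono; [exact S|exact K2]|].
  apply htpy_snoc.
  - apply B2; auto.
  - eapply chain_mono; [exact S|apply K2].
  - eapply path_snoc; [apply B1; auto|exact Ss]. Qed.
End U.

Section F.
Context {X Y : Type} (UX : ent X -> Prop) (UY : ent Y -> Prop) (f : X -> Y)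
  (hUX : uniformity UX) (hUY : uniformity UY) (hf : generates UX UY f).

Lemma gen_preim G : UY G -> UX (preim f G).
Proof. intro HG. destruct hf as [_ [_ h]]. destruct (h G HG) as [E [HE S]].
  eapply U_up; eauto. intros a b Hab. apply S. exists a, b. auto. Qed.

Lemma gen_img E : UX E -> UY (img f E).
Proof. apply hf. Qed.

Lemma ftilde_gpath x y a : gpath UX x y a -> gpath UY (f x) (f y) (ftilde f a).
Proof. intros [A1 A2]. split.
  - intros G HG. apply path_map. apply A1, gen_preim; auto.
  - intros G G' HG HG' S. unfold ftilde. apply htpy_map. apply A2; auto using gen_preim.
    intros u v H. apply S, H. Qed.
End F.

Section M.
Context {X Y : Type} (UX : ent X -> Prop) (UY : ent Y -> Prop) (f : X -> Y)
  (hUX : uniformity UX) (hUY : uniformity UY) (hHX : hausdorff UX)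
  (hf : generates UX UY f).

Lemma part1 : GP1 UX UY f -> GP2 UX UY f -> forall x0, unif_equiv UX UY f x0.
Proof. intros g1 g2 x0. split; [|split; [|split; [|split]]].
  - intros a b _ _ H G HG. unfold ftilde. apply htpy_map, H. apply (gen_preim UX UY); auto.
  - intros a b [ya Ha] [yb Hb] H.
    assert (key : forall E, UX E -> ehtpy E (a E) (b E)).
    { intros E HE. destruct (g2 E HE) as [F [HF P]]. apply (P x0); [exists ya; auto|exists yb; auto|].
      pose proof (ftilde_gpath UX UY f hUX hf _ _ _ Ha) as [FA _].
      pose proof (ftilde_gpath UX UY f hUX hf _ _ _ Hb) as [FB _].
      assert (HG : UY (img f F)) by (apply (gen_img UX UY f hf); auto).
      specialize (FA _ HG). specialize (FB _ HG). specialize (H _ HG).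
      pose proof (htpy_path _ _ _ _ _ H FA) as FB'.
      unfold gpent. apply (ehtpy_same _ (f x0) (f ya)); auto; apply (U_refl UY hUY); auto. }
    assert (ya = yb) as <-.
    { apply hHX. intros E HE. specialize (key E HE).
      apply (ehtpy_iff E x0 ya yb) in key as [K _]; auto.
      - apply Ha; auto.
      - apply Hb; auto.
      - apply (U_refl UX hUX); auto. }
    intros E HE. specialize (key E HE).
    apply (ehtpy_same E x0 ya) in key; auto; [apply Ha|apply Hb|apply (U_refl UX hUX)|apply (U_refl UX hUX)]; auto.
  - intros b Hb. apply g1; auto.
  - intros G HG. exists (preim f G). split; [apply (gen_preim UX UY); auto|].
    intros a b _ _ H. unfold gpent in *. unfold ftilde. apply ehtpy_map. exact H.
  - intros F HF. destruct (g2 F HF) as [F' [HF' P]]. exists (img f F').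
    split; [apply (gen_img UX UY f hf); auto|]. intros a b Ha Hb. destruct Ha as [ya Ha]; destruct Hb as [yb Hb]. apply (P x0); [exists ya|exists yb]; auto. Qed.
End M.

Section M2.
Context {X Y : Type} (UX : ent X -> Prop) (UY : ent Y -> Prop) (f : X -> Y)
  (hUX : uniformity UX) (hUY : uniformity UY)
  (hf : generates UX UY f).

Lemma part2 : joinable UX -> forall x1, unif_equiv UX UY f x1 -> GP1 UX UY f /\ GP2 UX UY f.
Proof. intros J x1 [_ [_ [ue3 [_ ue5]]]]. split.
  - intros x0 b [yb Hb]. destruct (J x1 x0) as [g Hg].
    pose proof (ftilde_gpath UX UY f hUX hf _ _ _ Hg) as Hfg.
    pose proof (gpath_cat UY _ _ _ _ _ Hfg Hb) as Hc.
    destruct (ue3 _ (ex_intro _ yb Hc)) as [a [[ya Ha] Ha']].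
    pose proof (gpath_cat UX _ _ _ _ _ (gpath_rev UX _ _ _ Hg) Ha) as Hd.
    exists (fun E => pcat (rev (g E)) (a E)). split; [exists ya; exact Hd|].
    intros G HG. assert (HE : UX (preim f G)) by (apply (gen_preim UX UY); auto).
    unfold ftilde. rewrite map_pcat, map_rev.
    pose proof (path_map f G _ _ _ (proj1 Hg _ HE)) as Pg.
    pose proof (path_map f G _ _ _ (proj1 Ha _ HE)) as Pa.
    pose proof (proj1 Hb _ HG) as Pb.
    pose proof (proj1 Hc _ HG) as Pc.
    pose proof (Ha' G HG) as K. unfold ftilde in K.
    eapply htpy_trans; [eapply htpy_cat_r; [eapply path_rev; exact Pg|exact Pa|exact Pc|exact K]|].
    rewrite <- pcat_assoc by (intro Hn; destruct Pg as [[l Hl] _]; unfold ftilde in Hn; rewrite Hn in Hl; discriminate).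
    exact (htpy_cancel G _ _ _ _ _ Pg Pb).
  - intros E HE. destruct (ue5 E HE) as [G [HG P]].
    destruct hf as [_ [_ h3]]. destruct (h3 G HG) as [F [HF S]].
    exists F. split; auto. intros x a b [ya Ha] [yb Hb] H.
    destruct (J x1 x) as [g Hg].
    pose proof (gpath_cat UX _ _ _ _ _ Hg Ha) as Ha2.
    pose proof (gpath_cat UX _ _ _ _ _ Hg Hb) as Hb2.
    pose proof (ftilde_gpath UX UY f hUX hf _ _ _ Hg) as Hfg.
    pose proof (ftilde_gpath UX UY f hUX hf _ _ _ Ha) as Hfa.
    pose proof (ftilde_gpath UX UY f hUX hf _ _ _ Hb) as Hfb.
    assert (H' : gpent G (ftilde f a) (ftilde f b)).
    { eapply (gpent_mono UY hUY); [exact Hfa|exact Hfb| |exact HG|exact S|exact H].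
      apply (gen_img UX UY f hf); auto. }
    assert (H2 : gpent E (fun E => pcat (g E) (a E)) (fun E => pcat (g E) (b E))).
    { apply (P _ _ (ex_intro _ ya Ha2) (ex_intro _ yb Hb2)).
      unfold gpent, ftilde in *. rewrite !map_pcat.
      eapply (ehtpy_shift G (f x1) (f x) (f ya) (f yb)); eauto.
      - apply (proj1 Hfg G HG).
      - apply (proj1 Hfa G HG).
      - apply (proj1 Hfb G HG).
      - apply (U_refl UY hUY); auto.
      - apply (U_refl UY hUY); auto. }
    unfold gpent in *. eapply (ehtpy_unshift E x1 x ya yb (g E)); eauto.
    + apply (proj1 Hg E HE).
    + apply (proj1 Ha E HE).
    + apply (proj1 Hb E HE).
    + apply (U_refl UX hUX); auto.
    + apply (U_refl UX hUX); auto. Qed.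
End M2.

Theorem mainTheorem12 (X Y : Type) (UX : ent X -> Prop) (UY : ent Y -> Prop)
  (f : X -> Y)
  (hUX : uniformity UX) (hUY : uniformity UY)
  (hHX : hausdorff UX) (hHY : hausdorff UY)
  (hf : generates UX UY f) :
  ((GP1 UX UY f /\ GP2 UX UY f) -> forall x0 : X, unif_equiv UX UY f x0) /\
  ((joinable UX /\ exists x1 : X, unif_equiv UX UY f x1) ->
     GP1 UX UY f /\ GP2 UX UY f).
Proof.
  split.
  - intros [g1 g2]. exact (part1 UX UY f hUX hUY hHX hf g1 g2).
  - intros [J [x1 H]]. exact (part2 UX UY f hUX hUY hf J x1 H).
Qed.
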